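(* Let $K\subset\mathbb{R}^m$ be a pointed, closed, convex cone with nonempty interior which is finitely generated, let $C\subset\mathbb{R}^m$ be a finite set with $0\notin C$ and $K^*=\operatorname{cone}(\operatorname{conv}(C))$, and let $F:\mathbb{R}^n\to\mathbb{R}^m$ be continuously differentiable. Define $h(x,d)=\max\{\langle JF(x)d,w\rangle : w\in C\}$ and $v(x)=\arg\min_{d}\{h(x,d)+\tfrac12\|d\|^2\}$. Fix $0<\rho<1$, $0<\delta<1$, $\mu>2$, and $e\in\operatorname{int}(K)$ with $\langle w,e\rangle\le1$ for all $w\in C$. Let $x^0\in\mathbb{R}^n$ and assume: (A1) there is an open set $\Lambda$ containing $\mathcal{L}=\{x: F(x)\preceq_K F(x^0)\}$ such that $\|JF(x)-JF(y)\|\le L\|x-y\|$ for all $x,y\in\Lambda$; (A2) every sequence $\{D_k\}\subset F(\mathcal{L})$ with $D_{k+1}\preceq_K D_k$ for all $k$ admits $D\in\mathbb{R}^m$ with $D\preceq_K D_k$ for all $k$. Let $\{x^k\}$ be an infinite sequence generated as follows: $d^0=v(x^0)$; for $k\ge1$, $d^k=v(x^k)+\beta_k d^{k-1}$ with $$\beta_k=\frac{-h(x^k,v(x^k))\big(|h(x^{k-1},v(x^k))|+h(x^{k-1},v(x^k))\big)}{\max\big\{\mu|h(x^k,d^{k-1})h(x^{k-1},v(x^k))|,\ -\mu h(x^{k-1},v(x^{k-1}))|h(x^{k-1},v(x^k))|\big\}};$$ $x^{k+1}=x^k+\alpha_kd^k$, where, with $\tau_k=-h(x^k,d^k)/\|d^k\|^2$,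 $\alpha_k$ is the largest element of $\{\tau_k,\delta\tau_k,\delta^2\tau_k,\dots\}$ satisfying the Armijo condition $$F(x^k+\alpha_kd^k)\preceq_K F(x^k)+\rho\alpha_k h(x^k,d^k)e.$$ Then $$\sum_{k\ge0}\frac{h^2(x^k,d^k)}{\|d^k\|^2}<\infty.$$
   Context: $u\preceq_K v$ means $v-u\in K$. $K^*$ is the positive polar cone of $K$ and $JF$ the Jacobian of $F$. The sequence is assumed infinite, i.e. $v(x^k)\neq0$ for all $k$ (equivalently no $x^k$ is a $K$-Pareto critical point). *)

(* Defs.v *)
From HB Require Import structures.
From mathcomp Require Import all_boot all_order all_algebra.
From mathcomp Require Import all_classical all_reals all_analysis.
Set Implicit Arguments. Unset Strict Implicit. Unset Printing Implicit Defensive.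
Import Order.TTheory GRing.Theory Num.Theory.
Import numFieldNormedType.Exports.
Local Open Scope classical_set_scope.
Local Open Scope ring_scope.

Section Defs.
Variable R : realType.

Definition dot {p : nat} (u w : 'cV[R]_p) : R := \sum_(i < p) u i 0 * w i 0.
Definition enorm {p : nat} (u : 'cV[R]_p) : R := Num.sqrt (dot u u).

Definition preceqK {p : nat} (K : set 'cV[R]_p) (u v : 'cV[R]_p) : Prop := K (v - u).

Definition is_convex_set {p : nat} (K : set 'cV[R]_p) : Prop :=
  forall u w (t : R), K u -> K w -> 0 <= t <= 1 -> K (t *: u + (1 - t) *: w).

Definition pointed_cone {p : nat} (K : set 'cV[R]_p) : Prop :=
  forall u, K u -> K (- u) -> u = 0.

Definition finitely_generated_cone {p : nat} (K : set 'cV[R]_p) : Prop :=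
  exists G : seq 'cV[R]_p,
    K = [set u | exists lam : 'I_(size G) -> R,
                  (forall i, 0 <= lam i) /\ u = \sum_(i < size G) lam i *: G`_i].

Definition dual_cone {p : nat} (K : set 'cV[R]_p) : set 'cV[R]_p :=
  [set w | forall u, K u -> 0 <= dot w u].

Definition conv_hull {p : nat} (C : seq 'cV[R]_p) : set 'cV[R]_p :=
  [set y | exists lam : 'I_(size C) -> R,
     [/\ forall i, 0 <= lam i, \sum_(i < size C) lam i = 1 &
         y = \sum_(i < size C) lam i *: C`_i]].

Definition cone_of {p : nat} (S : set 'cV[R]_p) : set 'cV[R]_p :=
  [set u | exists t : R, exists y, 0 <= t /\ S y /\ u = t *: y].

Definition hfun {n m : nat} (JF : 'cV[R]_n -> 'M[R]_(m, n)) (C : seq 'cV[R]_m)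
  (x d : 'cV[R]_n) : R :=
  \big[Num.max/ dot (JF x *m d) (head 0 C)]_(w <- C) dot (JF x *m d) w.

Definition armijo {n m : nat} (K : set 'cV[R]_m) (F : 'cV[R]_n -> 'cV[R]_m)
  (JF : 'cV[R]_n -> 'M[R]_(m, n)) (C : seq 'cV[R]_m) (rho : R) (e : 'cV[R]_m)
  (x d : 'cV[R]_n) (a : R) : Prop :=
  preceqK K (F (x + a *: d)) (F x + (rho * a * hfun JF C x d) *: e).

End Defs.

(* Main.v *)
Require Import Defs.
From HB Require Import structures.
From mathcomp Require Import all_boot all_order all_algebra.
From mathcomp Require Import all_classical all_reals all_analysis.
From mathcomp Require Import ring lra.
Import Order.TTheory GRing.Theory Num.Theory.
Import numFieldNormedType.Exports.
Local Open Scope classical_set_scope.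
Local Open Scope ring_scope.


Section Basics.
Context {R : realType}.
Context {p : nat}.
Implicit Types u w y : 'cV[R]_p.

Lemma msq_ge0 (a : R) : 0 <= a * a.
Proof. by rewrite -expr2 sqr_ge0. Qed.

Lemma dotC u w : dot u w = dot w u.
Proof. by apply: eq_bigr => i _; rewrite mulrC. Qed.

Lemma dotDr u w y : dot u (w + y) = dot u w + dot u y.
Proof. by rewrite /dot -big_split; apply: eq_bigr => i _; rewrite !mxE mulrDr. Qed.

Lemma dotDl u w y : dot (w + y) u = dot w u + dot y u.
Proof. by rewrite dotC dotDr !(dotC u). Qed.

Lemma dotZr a u w : dot u (a *: w) = a * dot u w.
Proof. by rewrite /dot mulr_sumr; apply: eq_bigr => i _; rewrite !mxE mulrCA. Qed.

Lemma dotZl a u w : dot (a *: u) w = a * dot u w.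
Proof. by rewrite dotC dotZr dotC. Qed.

Lemma dotNr u w : dot u (- w) = - dot u w.
Proof. by rewrite -scaleN1r dotZr mulN1r. Qed.

Lemma dotNl u w : dot (- u) w = - dot u w.
Proof. by rewrite dotC dotNr dotC. Qed.

Lemma dotBr u w y : dot u (w - y) = dot u w - dot u y.
Proof. by rewrite dotDr dotNr. Qed.

Lemma dotBl u w y : dot (w - y) u = dot w u - dot y u.
Proof. by rewrite dotDl dotNl. Qed.

Lemma dot0r u : dot u 0 = 0.
Proof. by rewrite /dot big1 // => i _; rewrite mxE mulr0. Qed.

Lemma dot0l u : dot 0 u = 0.
Proof. by rewrite dotC dot0r. Qed.

Lemma dot_ge0 u : 0 <= dot u u.
Proof. by apply: sumr_ge0 => i _; exact: msq_ge0. Qed.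

Lemma coord_sq_le u i : u i 0 * u i 0 <= dot u u.
Proof.
rewrite /dot (bigD1 i) //= lerDl; apply: sumr_ge0 => j _; exact: msq_ge0.
Qed.

Lemma dot_eq0 u : dot u u = 0 -> u = 0.
Proof.
move=> H; apply/matrixP => i j; rewrite ord1 mxE.
have := coord_sq_le u i; rewrite H => H1.
have : u i 0 * u i 0 = 0 by apply/eqP; rewrite eq_le H1 msq_ge0.
by move/eqP; rewrite mulf_eq0 orbb => /eqP.
Qed.

Lemma dot_gt0 u : u != 0 -> 0 < dot u u.
Proof.
move=> H; rewrite lt_def dot_ge0 andbT; apply/eqP => /dot_eq0 /eqP.
by rewrite (negbTE H).
Qed.

Lemma enorm_ge0 u : 0 <= enorm u.
Proof. exact: sqrtr_ge0. Qed.

Lemma enorm_sq u : enorm u ^+ 2 = dot u u.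
Proof. by rewrite sqr_sqrtr // dot_ge0. Qed.

Lemma enorm0 : enorm (0 : 'cV[R]_p) = 0.
Proof. by rewrite /enorm dot0r sqrtr0. Qed.

Lemma enormZ a u : enorm (a *: u) = `|a| * enorm u.
Proof.
by rewrite /enorm dotZl dotZr mulrA -expr2 sqrtrM ?sqrtr_sqr // sqr_ge0.
Qed.

Lemma coord_le_enorm u i : `|u i 0| <= enorm u.
Proof.
rewrite -(sqrtr_sqr (u i 0)) /enorm ler_sqrt ?dot_ge0 //.
by rewrite expr2 coord_sq_le.
Qed.

Lemma cauchy_schwarz u w : dot u w <= enorm u * enorm w.
Proof.
have [->|w0] := eqVneq w 0; first by rewrite dot0r enorm0 mulr0.
have dw := @dot_gt0 w w0.
pose t := dot u w / dot w w.
have H := dot_ge0 (u - t *: w).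
rewrite dotBl !dotBr !dotZl !dotZr (dotC w u) in H.
have e1 : t * dot w w = dot u w by rewrite /t divfK // gt_eqF.
rewrite e1 in H.

have H2 : dot u w ^+ 2 <= dot u u * dot w w.
  have H3 : t * dot u w <= dot u u.
    by rewrite -subr_ge0; move: H; rewrite subrr subr0.
  by move: H3; rewrite /t mulrAC ler_pdivrMr // -expr2.
have [uwle|uwgt] := lerP (dot u w) 0.
  by apply: le_trans uwle _; rewrite mulr_ge0 // enorm_ge0.
rewrite -[dot u w]ger0_norm ?(ltW uwgt) // -sqrtr_sqr /enorm -sqrtrM ?dot_ge0 // ler_sqrt ?mulr_ge0 ?dot_ge0 //.
Qed.


End Basics.


Section Cone.
Context {R : realType}.
Context {p : nat}.
Implicit Types u w y : 'cV[R]_p.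
Context {K : set 'cV[R]_p}.
Hypothesis hK : finitely_generated_cone K.

Lemma cone0 : K 0.
Proof.
case: hK => G ->; exists (fun=> 0); split => //.
by rewrite big1 // => i _; rewrite scale0r.
Qed.

Lemma coneD {u w : 'cV[R]_p} : K u -> K w -> K (u + w).
Proof.
case: hK => G -> [l1 [l1p ->]] [l2 [l2p ->]].
exists (fun i => l1 i + l2 i); split; first by move=> i; rewrite addr_ge0.
by rewrite -big_split; apply: eq_bigr => i _; rewrite scalerDl.
Qed.

Lemma coneZ {a : R} {u : 'cV[R]_p} : 0 <= a -> K u -> K (a *: u).
Proof.
move=> a0; case: hK => G -> [l1 [l1p ->]].
exists (fun i => a * l1 i); split; first by move=> i; rewrite mulr_ge0.
by rewrite scaler_sumr; apply: eq_bigr => i _; rewrite scalerA.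
Qed.

Lemma preceq_trans a b c : preceqK K a b -> preceqK K b c -> preceqK K a c.
Proof.
rewrite /preceqK => h1 h2.
by have := coneD h2 h1; rewrite addrA subrK.
Qed.

Lemma preceq_refl a : preceqK K a a.
Proof. by rewrite /preceqK subrr; exact: cone0. Qed.

End Cone.

Section Compact.
Context {R : realType}.
Context {p : nat}.

Lemma trmx_cont : continuous (@trmx R 1 p).
Proof.
move=> u A /nbhs_ballP[e /= e0 eA].
apply/nbhs_ballP; exists e => //= v [_ uv]; apply: eA; split => // i j.
by rewrite !mxE; exact: uv.
Qed.

Lemma dotsq_cont (y : 'cV[R]_p) : continuous (fun k : 'cV[R]_p => dot (y - k) (y - k)).
Proof.
have -> : (fun k : 'cV[R]_p => dot (y - k) (y - k)) =
   (fun k => \big[+%R/0]_(i <- index_enum 'I_p) ((y i 0 - k i 0) * (y i 0 - k i 0))).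
  by apply/funext => k; rewrite /dot; apply: eq_bigr => i _; rewrite !mxE.
apply: continuous_big; first exact: add_continuous.
move=> i _ k.
have hc : {for k, continuous (fun k : 'cV[R]_p => y i 0 - k i 0)}.
  apply: (@continuousB _ _ _ (fun=> y i 0) (fun k : 'cV[R]_p => k i 0)).
    exact: cst_continuous.
  exact: coord_continuous.
exact: (@continuousM _ _ (fun k : 'cV[R]_p => y i 0 - k i 0) (fun k : 'cV[R]_p => y i 0 - k i 0) k hc hc).
Qed.

End Compact.


Section Bipolar.
Context {R : realType}.
Context {p : nat}.
Implicit Types u w y : 'cV[R]_p.

Lemma dot_expand (a k : 'cV[R]_p) (t : R) :
  dot (a + t *: k) (a + t *: k) = dot a a + 2 * t * dot a k + t ^+ 2 * dot k k.
Proof.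
rewrite !dotDl !dotDr !dotZl !dotZr (dotC k a); ring.
Qed.

Lemma small_t (a b : R) : (forall t, 0 < t <= 1 -> 2 * a <= t * b) -> a <= 0.
Proof.
move=> H; rewrite leNgt; apply/negP => a0.
have h1 : 2 * a <= b by have := H 1; rewrite ltr01 lexx mul1r; apply.
have b0 : 0 < b by lra.
have ab : a <= b by lra.
have := H (a / b); rewrite divr_gt0 //= ler_pdivrMr // mul1r ab => /(_ isT).
rewrite divfK ?gt_eqF // => h.
lra.
Qed.

Lemma proj_exists (K : set 'cV[R]_p) : closed K -> K 0 -> forall y,
  exists2 q, K q & forall k, K k -> dot (y - q) (y - q) <= dot (y - k) (y - k).
Proof.
move=> Kcl K0 y.
pose g := fun r : 'rV[R]_p => dot (y - r^T) (y - r^T).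
pose S := [set r : 'rV[R]_p | K r^T /\ g r <= dot y y].
have gc : continuous g.
  by move=> r; exact: (continuous_comp (trmx_cont r) (dotsq_cont y r^T)).
have Scl : closed S.
  rewrite (_ : S = (trmx @^-1` K) `&` (g @^-1` [set z | z <= dot y y])) //.
  apply: closedI.
    by apply: preimage_closed => // r _; exact: trmx_cont.
  by apply: preimage_closed; [move=> r _; exact: gc|exact: closed_le].
have Sb : bounded_set S.
  exists (2 * enorm y); split; first exact: num_real.
  move=> M HM r [Kr gr] /=.
  rewrite [`|r|]/Num.norm /= mx_normrE; apply: bigmax_le.
    by apply: le_trans (ltW HM); rewrite mulr_ge0 // enorm_ge0.
  move=> [i j] _ /=; rewrite (ord1 i).
  apply: le_trans (ltW HM).
  have -> : r 0 j = y j 0 - (y - r^T) j 0 by rewrite !mxE opprB addrC subrK.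
  apply: le_trans (ler_normB _ _) _.
  rewrite mulr2n mulrDl mul1r; apply: lerD; first exact: coord_le_enorm.
  apply: le_trans (coord_le_enorm _ _) _.
  by rewrite /enorm ler_sqrt // dot_ge0.
have S0 : S !=set0.
  by exists 0; rewrite /S /g /= trmx0 subr0; split.
have cS : compact S := bounded_closed_compact Sb Scl.
have [c cS' cmin] := compact_EVT_min S0 cS (continuous_subspaceT gc).
move: cS'; rewrite inE => -[Kc gc'].
exists c^T => // k Kk.
have [kle|kgt] := leP (dot (y - k) (y - k)) (dot y y).
  by have := cmin k^T; rewrite /g trmxK; apply; rewrite inE; split; rewrite ?trmxK // /g trmxK.
by apply: le_trans gc' (ltW kgt).
Qed.

Variable K : set 'cV[R]_p.
Hypothesis hK : finitely_generated_cone K.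
Hypothesis Kcl : closed K.
Variable C : seq 'cV[R]_p.
Hypothesis Kdual : dual_cone K = cone_of (conv_hull C).

Lemma dot_suml n (F : 'I_n -> 'cV[R]_p) y :
  dot (\sum_(k < n) F k) y = \sum_(k < n) dot (F k) y.
Proof.
elim: n F => [|n IH] F; first by rewrite !big_ord0 dot0l.
by rewrite !big_ord_recr /= dotDl IH.
Qed.

Lemma dual_dot w y : dual_cone K w -> (forall c, c \in C -> 0 <= dot c y) -> 0 <= dot w y.
Proof.
rewrite Kdual => -[t [z [t0 [[l [l0 _ ->]] ->]]]] Hy.
rewrite dotZl dot_suml; apply: mulr_ge0 => //; apply: sumr_ge0 => k _.
by rewrite dotZl mulr_ge0 // Hy // mem_nth.
Qed.

Lemma C_in_dual c : c \in C -> dual_cone K c.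
Proof.
move=> cC; rewrite Kdual; exists 1, c; split => //; split; last by rewrite scale1r.
pose i0 := index c C.
have i0lt : (i0 < size C)%N by rewrite index_mem.
exists (fun i : 'I_(size C) => if val i == i0 then 1 else 0); split.
- by move=> i; case: ifP.
- rewrite (bigD1 (Ordinal i0lt)) //= eqxx big1 ?addr0 // => i /negbTE.
  by case: ifP => // /eqP h; rewrite -val_eqE /= h eqxx.
- rewrite (bigD1 (Ordinal i0lt)) //= eqxx scale1r big1 ?addr0 ?nth_index //.
  move=> i; case: ifP => // /eqP h; last by rewrite scale0r.
  by rewrite -val_eqE /= h eqxx.
Qed.

Lemma bipolar y : (forall w, w \in C -> 0 <= dot w y) -> K y.
Proof.
move=> Hy; have [//|nKy] := pselect (K y).
have [q Kq qmin] := proj_exists K Kcl (cone0 hK) y.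
have key1 : forall k, K k -> dot (y - q) k <= 0.
  move=> k Kk; apply: (@small_t _ (dot k k)) => t /andP[t0 t1].
  have Kqt : K (q + t *: k) by apply: (coneD hK Kq (coneZ hK (ltW t0) Kk)).
  have := qmin _ Kqt.
  rewrite (_ : y - (q + t *: k) = (y - q) + (- t) *: k); last first.
    by rewrite scaleNr opprD addrA.
  rewrite dot_expand => h.
  set A := dot (y - q) k in h *; set B := dot k k in h *.
  have h2 : t * (2 * A) <= t * (t * B) by move: h; rewrite sqrrN expr2; lra.
  by rewrite ler_pM2l in h2.
have key2 : 0 <= dot (y - q) q.
  rewrite -oppr_le0; apply: (@small_t _ (dot q q)) => t /andP[t0 t1].
  have Kqt : K ((1 - t) *: q) by apply: (coneZ hK _ Kq); lra.
  have := qmin _ Kqt.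
  rewrite (_ : y - (1 - t) *: q = (y - q) + t *: q); last first.
    by rewrite scalerBl scale1r opprB addrCA addrC.
  rewrite dot_expand => h.
  set A := dot (y - q) q in h *; set B := dot q q in h *.
  have h2 : t * (2 * - A) <= t * (t * B) by move: h; rewrite expr2; lra.
  by rewrite ler_pM2l in h2.
have zd : dual_cone K (q - y).
  move=> u Ku; rewrite -opprB dotNl oppr_ge0; exact: key1.
have := dual_dot _ _ zd Hy.
have -> : dot (q - y) y = - dot (y - q) (y - q) - dot (y - q) q.
  by rewrite !dotBl !dotBr (dotC q y); ring.
have : y - q != 0.
  by apply/eqP => /eqP; rewrite subr_eq0 => /eqP e; apply: nKy; rewrite e.
move/dot_gt0 => h1 h2; lra.
Qed.


End Bipolar.


Section Hfun.
Context {R : realType}.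

Lemma bigmax_att (T : eqType) (f : T -> R) idx (s : seq T) :
  \big[Num.max/idx]_(w <- s) f w = idx \/
  exists2 w, w \in s & \big[Num.max/idx]_(w <- s) f w = f w.
Proof.
elim: s => [|c s IH]; first by left; rewrite big_nil.
rewrite big_cons; have [le|lt] := leP (f c) (\big[Num.max/idx]_(w <- s) f w).
  case: IH => [->|[w ws ->]]; first by left.
  by right; exists w => //; rewrite inE ws orbT.
by right; exists c => //; rewrite inE eqxx.
Qed.

Lemma bigmax_ge (T : eqType) (f : T -> R) idx (s : seq T) w :
  w \in s -> f w <= \big[Num.max/idx]_(w <- s) f w.
Proof.
elim: s => [|c s IH] //; rewrite inE big_cons => /orP[/eqP ->|ws].
  by rewrite le_max lexx.
by rewrite le_max (IH ws) orbT.
Qed.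

Context {n m : nat} (JF : 'cV[R]_n -> 'M[R]_(m, n)) (C : seq 'cV[R]_m).
Hypothesis Cne : C != [::].

Lemma hfun_ge z u w : w \in C -> dot (JF z *m u) w <= hfun JF C z u.
Proof. by move=> wC; rewrite /hfun; exact: (@bigmax_ge _ (fun w => dot (JF z *m u) w) _ C w wC). Qed.

Lemma hfun_att z u : exists2 w, w \in C & hfun JF C z u = dot (JF z *m u) w.
Proof.
rewrite /hfun; case: (@bigmax_att _ (fun w => dot (JF z *m u) w) (dot (JF z *m u) (head 0 C)) C).
  by move=> ->; exists (head 0 C) => //; case: C Cne => // c s _; rewrite inE eqxx.
by case=> w wC ->; exists w.
Qed.

Lemma hfun0 z : hfun JF C z 0 = 0.
Proof. by have [w _ ->] := hfun_att z 0; rewrite mulmx0 dot0l. Qed.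

Lemma hfunD z u v : hfun JF C z (u + v) <= hfun JF C z u + hfun JF C z v.
Proof.
have [w wC ->] := hfun_att z (u + v).
by rewrite mulmxDr dotDl lerD // hfun_ge.
Qed.

Lemma hfunZ z a u : 0 <= a -> hfun JF C z (a *: u) <= a * hfun JF C z u.
Proof.
move=> a0; have [w wC ->] := hfun_att z (a *: u).
by rewrite -scalemxAr dotZl ler_wpM2l // hfun_ge.
Qed.

End Hfun.


Section Deriv.
Context {R : realType} {n m : nat}.

Lemma dotw_cont (w : 'cV[R]_m) : continuous (fun u : 'cV[R]_m => dot w u).
Proof.
have -> : (fun u : 'cV[R]_m => dot w u) =
   (fun u => \big[+%R/0]_(i <- index_enum 'I_m) (w i 0 * u i 0)) by [].
apply: continuous_big; first exact: add_continuous.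
move=> i _ k.
have h1 : {for k, continuous (fun=> w i 0 : R)} by exact: cst_continuous.
have h2 : {for k, continuous (fun k : 'cV[R]_m => k i 0)} by exact: coord_continuous.
exact: (@continuousM _ _ (fun=> w i 0) (fun k : 'cV[R]_m => k i 0) k h1 h2).
Qed.

Variables (F : 'cV[R]_n -> 'cV[R]_m) (JF : 'cV[R]_n -> 'M[R]_(m, n)).
Hypothesis Fd : forall z, differentiable F z /\
  ('d F z : 'cV[R]_n -> 'cV[R]_m) = (fun u => JF z *m u).

Lemma phi_derive (w : 'cV[R]_m) (x d : 'cV[R]_n) (s : R) :
  is_derive s 1 (fun s : R => dot w (F (x + s *: d))) (dot w (JF (x + s *: d) *m d)).
Proof.
pose dl := fun u : 'cV[R]_m => (dot w u : R).
have dlin : linear dl by move=> a u v; rewrite /dl dotDr dotZr.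
pose dL : {linear 'cV[R]_m -> R} := HB.pack dl (GRing.isLinear.Build _ _ _ _ dl dlin).
have dLc : continuous dL by exact: dotw_cont.
pose g := fun s : R => x + s *: d.
have hsc : is_diff s ( *:%R ^~ d : R -> 'cV[R]_n) ( *:%R ^~ d) := is_diff_scalel s d.
have hcs : is_diff s (cst x : R -> 'cV[R]_n) 0 := is_diff_cst x s.
have gdi : is_diff s g (0 + ( *:%R ^~ d)) := is_diffD hcs hsc.
have gd : differentiable g s by case: gdi.
have gdv : 'd g s = (fun h => h *: d) :> (R -> _).
  by case: gdi => _ ->; apply/funext => h /=; rewrite add0r.
have Fg : differentiable F (g s) by case: (Fd (g s)).
have phid : differentiable (dL \o (F \o g)) s.
  apply: differentiable_comp; first exact: differentiable_comp.
  exact: linear_differentiable.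
have -> : (fun s : R => dot w (F (x + s *: d))) = dL \o (F \o g) by [].
have -> : dot w (JF (x + s *: d) *m d) = 'D_1 (dL \o (F \o g)) s.
  rewrite deriveE //.
  have FGd : differentiable (F \o g) s by exact: differentiable_comp.
  have dLd : differentiable dL ((F \o g) s) by exact: linear_differentiable.
  have e1 := @diff_comp R _ _ _ (F \o g) dL s FGd dLd.
  have e2 := @diff_comp R _ _ _ g F s gd Fg.
  have e3 := @diff_lin R _ _ dL ((F \o g) s) dLc.
  rewrite e1 e3 /= e2 /= gdv /=.
  by case: (Fd (g s)) => _ ->; rewrite scale1r.
by apply: derivableP; exact: diff_derivable.
Qed.

End Deriv.


Section Taylor.
Context {R : realType} {n m : nat}.
Variables (F : 'cV[R]_n -> 'cV[R]_m) (JF : 'cV[R]_n -> 'M[R]_(m, n)).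
Hypothesis Fd : forall z, differentiable F z /\
  ('d F z : 'cV[R]_n -> 'cV[R]_m) = (fun u => JF z *m u).

Lemma taylor (w : 'cV[R]_m) (x d : 'cV[R]_n) (t : R) (Lam : set 'cV[R]_n) (L : R) :
  (forall y z, Lam y -> Lam z -> forall u,
     enorm ((JF y - JF z) *m u) <= L * enorm (y - z) * enorm u) ->
  0 <= t -> (forall u, 0 <= u < t -> Lam (x + u *: d)) ->
  dot w (F (x + t *: d)) - dot w (F x) <=
    t * dot w (JF x *m d) + t * (t * (`|L| * enorm w * enorm d ^+ 2)).
Proof.
move=> Lip t0 Hl.
have [->|tpos] := eqVneq t 0.
  by rewrite scale0r addr0 subrr !mul0r addr0.
have tgt0 : 0 < t by rewrite lt_def tpos t0.
pose phi := fun s : R => dot w (F (x + s *: d)).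
pose df := fun s : R => dot w (JF (x + s *: d) *m d).
have hd : forall s : R, is_derive s (1 : R) phi (df s) by move=> s; exact: (@phi_derive _ _ _ F JF Fd).
have hc : {within `[0, t], continuous phi}.
  apply: derivable_within_continuous => s _; exact: ex_derive.
have [c cab E] := MVT tgt0 (fun s _ => hd s) hc.
have c0 : 0 < c by rewrite (itvP cab).
have ct : c < t by rewrite (itvP cab).
have -> : dot w (F x) = phi 0 by rewrite /phi scale0r addr0.
rewrite -/(phi t) E subr0 /df.
have Lx : Lam x by have := Hl 0; rewrite scale0r addr0; apply; rewrite lexx.
have Lc : Lam (x + c *: d) by apply: Hl; rewrite (ltW c0).
have e : JF (x + c *: d) *m d = JF x *m d + (JF (x + c *: d) - JF x) *m d.
  by rewrite mulmxBl [JF x *m d + _]addrC subrK.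
rewrite e dotDr mulrDl mulrC; apply: lerD; first by rewrite mulrC.
rewrite mulrC ler_pM2l //.
apply: le_trans (cauchy_schwarz _ _) _.
have h1 := Lip _ _ Lc Lx d.
rewrite addrAC subrr add0r enormZ ger0_norm ?(ltW c0) // in h1.
have dge := enorm_ge0 d.
have h2 : enorm ((JF (x + c *: d) - JF x) *m d) <= `|L| * (t * enorm d ^+ 2).
  apply: le_trans h1 _.
  rewrite -mulrA.
  apply: le_trans (ler_wpM2r _ (ler_norm L)) _; first by rewrite mulr_ge0 // mulr_ge0 // ltW.
  apply: ler_wpM2l; first exact: normr_ge0.
  by rewrite expr2 mulrA ler_wpM2r // ler_wpM2r // ltW.
apply: le_trans (ler_wpM2l (enorm_ge0 w) h2) _.
by rewrite le_eqVlt; apply/orP; left; apply/eqP; ring.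
Qed.

End Taylor.


Section Topo.
Context {R : realType} {p : nat}.

Lemma interior_ball (A : set 'cV[R]_p) z : interior A z ->
  exists2 r, 0 < r & forall y : 'cV[R]_p, (forall i, `|z i 0 - y i 0| < r) -> A y.
Proof.
move=> /nbhs_ballP [r r0 H]; exists r => // y Hy; apply: H.
split => // i j; rewrite (ord1 j); exact: Hy.
Qed.

Lemma open_line (A : set 'cV[R]_p) (z d : 'cV[R]_p) : open A -> A z ->
  exists2 r, 0 < r & forall u : R, `|u| < r -> A (z + u *: d).
Proof.
rewrite openE => Ao Az; have [r r0 H] := interior_ball _ _ (Ao z Az).
have d0 := enorm_ge0 d.
exists (r / (1 + enorm d)); first by rewrite divr_gt0 // ltr_wpDr.
move=> u hu; apply: H => i; rewrite !mxE opprD addrA subrr add0r normrN normrM.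
apply: le_lt_trans (ler_wpM2l (normr_ge0 u) (coord_le_enorm d i)) _.
rewrite ltr_pdivlMr ?ltr_wpDr // in hu.
apply: le_lt_trans hu; rewrite ler_wpM2l //; lra.
Qed.

End Topo.


Section Armijo.
Context {R : realType} {n m : nat}.
Variables (K : set 'cV[R]_m) (C : seq 'cV[R]_m) (F : 'cV[R]_n -> 'cV[R]_m)
  (JF : 'cV[R]_n -> 'M[R]_(m, n)) (rho : R) (e : 'cV[R]_m) (Lam : set 'cV[R]_n)
  (L : R) (x0 : 'cV[R]_n).
Hypothesis hK : finitely_generated_cone K.
Hypothesis Kcl : closed K.
Hypothesis Kdual : dual_cone K = cone_of (conv_hull C).
Hypothesis Cne : C != [::].
Hypothesis Fd : forall z, differentiable F z /\
  ('d F z : 'cV[R]_n -> 'cV[R]_m) = (fun u => JF z *m u).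
Hypothesis rho0 : 0 < rho.
Hypothesis rho1 : rho < 1.
Hypothesis eK : K e.
Hypothesis Ce : forall w, w \in C -> dot w e <= 1.
Hypothesis Lamo : open Lam.
Hypothesis LsubLam : forall z, preceqK K (F z) (F x0) -> Lam z.
Hypothesis Lip : forall y z, Lam y -> Lam z -> forall u,
     enorm ((JF y - JF z) *m u) <= L * enorm (y - z) * enorm u.

Definition Mc := (`|L| + 1) * (1 + \sum_(w <- C) enorm w).

Lemma sumC_ge0 : 0 <= \sum_(w <- C) enorm w.
Proof. by apply: sumr_ge0 => w _; exact: enorm_ge0. Qed.

Lemma Mc_gt0 : 0 < Mc.
Proof.
have := sumC_ge0; have := normr_ge0 L => h1 h2.
by rewrite mulr_gt0 //; lra.
Qed.

Lemma Mc_ge w : w \in C -> `|L| * enorm w <= Mc.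
Proof.
move=> wC; rewrite /Mc; apply: ler_pM; rewrite ?normr_ge0 ?enorm_ge0 //.
  by rewrite lerDl.
rewrite (big_rem w wC) /=; have := enorm_ge0 w.
have : 0 <= \sum_(y <- rem w C) enorm y by apply: sumr_ge0 => y _; exact: enorm_ge0.
lra.
Qed.

Lemma armijo_at x d t : hfun JF C x d < 0 -> 0 <= t ->
  t * Mc * enorm d ^+ 2 <= (1 - rho) * - hfun JF C x d ->
  (forall u, 0 <= u < t -> Lam (x + u *: d)) ->
  armijo K F JF C rho e x d t.
Proof.
move=> h0 t0 tM Hl; rewrite /armijo /preceqK.
apply: (@bipolar _ _ K hK Kcl C Kdual) => w wC.
have T := @taylor _ _ _ F JF Fd w x d t Lam L Lip t0 Hl.
have hg := @hfun_ge _ _ _ JF C x d w wC.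
have hm := Mc_ge w wC.
have E1 := Ce w wC.
rewrite dotBr dotDr dotZr.
move: T hg hm tM E1 h0.
rewrite (dotC (JF x *m d) w).
set h := hfun JF C x d; set a := dot w (F x); set b := dot w (F (x + t *: d)).
set J := dot w (JF x *m d); set E := dot w e; set Lw := `|L| * enorm w.
set D := enorm d ^+ 2.
move=> T hg hm tM E1 h0.
have D0 : 0 <= D by rewrite /D sqr_ge0.
have s1 : t * J <= t * h by rewrite ler_wpM2l.
have s2 : t * (t * (Lw * D)) <= t * ((1 - rho) * - h).
  rewrite ler_wpM2l //; apply: le_trans tM; rewrite mulrA ler_wpM2r //.
  by rewrite ler_wpM2l.
have s3 : rho * t * h <= rho * t * h * E.
  rewrite -{1}(mulr1 (rho * t * h)); apply: ler_wnM2l => //.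
  by apply: mulr_ge0_le0; [rewrite mulr_ge0 // ltW | exact: ltW].
have : t * dot w (JF x *m d) + t * (t * (`|L| * enorm w * enorm d ^+ 2)) =
       t * J + t * (t * (Lw * D)) by rewrite /Lw /D mulrA.
move=> eq; rewrite eq in T.
lra.
Qed.

Lemma preceq_shift a c : c <= 0 -> preceqK K (a + c *: e) a.
Proof.
move=> c0; rewrite /preceqK opprD addrA subrr add0r -scaleNr.
by apply: (coneZ hK _ eK); rewrite oppr_ge0.
Qed.

Lemma armijo_small x d : preceqK K (F x) (F x0) -> hfun JF C x d < 0 -> d != 0 ->
  forall t, 0 <= t <= (1 - rho) * - hfun JF C x d / (Mc * enorm d ^+ 2) ->
  armijo K F JF C rho e x d t.
Proof.
move=> xL h0 d0.
set h := hfun JF C x d in h0 *.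
set T := (1 - rho) * - h / (Mc * enorm d ^+ 2).
have D0 : 0 < enorm d ^+ 2 by rewrite enorm_sq dot_gt0.
have MD0 : 0 < Mc * enorm d ^+ 2 := mulr_gt0 Mc_gt0 D0.
have T0 : 0 <= T.
  by rewrite /T divr_ge0 ?(ltW MD0) // mulr_ge0 // ?subr_ge0 ?oppr_ge0 ltW.
have TM : forall t, t <= T -> t * Mc * enorm d ^+ 2 <= (1 - rho) * - h.
  by move=> t; rewrite /T ler_pdivlMr // mulrA.
pose A := [set s | 0 <= s <= T /\ forall u, 0 <= u <= s -> Lam (x + u *: d)].
have Lx : Lam x := LsubLam x xL.
have A0 : A 0.
  split; first by rewrite lexx T0.
  move=> u /andP[u0 u0']; have -> : u = 0 by apply/eqP; rewrite eq_le u0' u0.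
  by rewrite scale0r addr0.
have hsA : has_sup A.
  by split; [exists 0 | exists T => s [/andP[_ sT] _]].
set s := sup A.
have s0 : 0 <= s := sup_upper_bound hsA A0.
have sT : s <= T.
  by apply: ge_sup; [exists 0 | move=> y [/andP[_ yT] _]].
have step1 : forall u, 0 <= u < s -> Lam (x + u *: d).
  move=> u /andP[u0 us].
  have su0 : 0 < s - u by rewrite subr_gt0.
  have [a [_ Ha] ua] := sup_adherent su0 hsA.
  rewrite opprB addrC subrK in ua.
  by apply: Ha; rewrite u0 ltW.
have step2 : Lam (x + s *: d).
  have Ha := armijo_at x d s h0 s0 (TM s sT) step1.
  apply: LsubLam; apply: (preceq_trans hK _ _ _ Ha); apply: (preceq_trans hK _ _ _ _ xL).
  apply: preceq_shift; rewrite -mulrA mulr_ge0_le0 ?(ltW rho0) //.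
  by rewrite mulr_ge0_le0 // ltW.
have sTe : s = T.
  apply/eqP; rewrite eq_le sT /= leNgt; apply/negP => sltT.
  have [r r0 Hr] := open_line _ _ d Lamo step2.
  pose del := Num.min (T - s) (r / 2).
  have del0 : 0 < del by rewrite lt_min subr_gt0 sltT divr_gt0.
  have delT : del <= T - s by rewrite ge_min lexx.
  have delr : del < r by rewrite gt_min; apply/orP; right; lra.
  have : A (s + del).
    split; first by apply/andP; split; lra.
    move=> u /andP[u0 ule]; have [us|su] := ltP u s; first by apply: step1; rewrite u0.
    have -> : x + u *: d = (x + s *: d) + (u - s) *: d.
      by rewrite scalerBl [u *: d - _]addrC addrA addrK.
    by apply: Hr; rewrite ger0_norm ?subr_ge0 //; lra.
  move/(sup_upper_bound hsA) => /=; rewrite -/s; lra.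
move=> t /andP[t0 tT]; apply: (armijo_at x d t h0 t0 (TM t tT)) => u /andP[u0 ut].
by apply: step1; rewrite u0 (lt_le_trans ut) // sTe.
Qed.

End Armijo.


Lemma sum_ord0_eq (R : realType) k (l : 'I_k -> R) : k = 0%N -> \sum_(i < k) l i = 0.
Proof. by move=> k0; subst k; rewrite big_ord0. Qed.

Lemma geo_small (R : realType) (dl eps : R) : 0 < dl < 1 -> 0 < eps ->
  exists j : nat, dl ^+ j <= eps.
Proof.
move=> /andP[d0 d1] e0.
have hc : (GRing.exp dl : R ^nat) @ \oo --> 0.
  by apply: cvg_expr; rewrite ger0_norm ?ltW.
have := cvgr0_norm_lt _ hc _ e0; case=> N _ HN.
exists N; have := HN N (leqnn N); rewrite /= ger0_norm; [exact: ltW | by rewrite exprn_ge0 // ltW].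
Qed.

Theorem mainTheorem3 (R : realType) (n m : nat)
  (K : set 'cV[R]_m) (C : seq 'cV[R]_m)
  (F : 'cV[R]_n -> 'cV[R]_m) (JF : 'cV[R]_n -> 'M[R]_(m, n))
  (v : 'cV[R]_n -> 'cV[R]_n)
  (rho delta mu : R) (e : 'cV[R]_m)
  (x d : nat -> 'cV[R]_n) (alpha beta : nat -> R) :
  pointed_cone K -> closed K -> is_convex_set K -> (interior K !=set0) ->
  finitely_generated_cone K ->
  (0 \notin C) -> dual_cone K = cone_of (conv_hull C) ->
  (forall z, differentiable F z /\ ('d F z : 'cV[R]_n -> 'cV[R]_m) = (fun u => JF z *m u)) ->
  continuous JF ->
  (forall z u, hfun JF C z (v z) + 2^-1 * enorm (v z) ^+ 2
               <= hfun JF C z u + 2^-1 * enorm u ^+ 2) ->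
  0 < rho < 1 -> 0 < delta < 1 -> 2 < mu ->
  interior K e -> (forall w, w \in C -> dot w e <= 1) ->
  (exists Lam : set 'cV[R]_n, open Lam /\
     [set z | preceqK K (F z) (F (x 0%N))] `<=` Lam /\
     exists L : R, forall y z, Lam y -> Lam z -> forall u,
       enorm ((JF y - JF z) *m u) <= L * enorm (y - z) * enorm u) ->
  (forall D : nat -> 'cV[R]_m,
     (forall k, exists z, preceqK K (F z) (F (x 0%N)) /\ D k = F z) ->
     (forall k, preceqK K (D k.+1) (D k)) ->
     exists D0, forall k, preceqK K D0 (D k)) ->
  (forall k, v (x k) <> 0) ->
  d 0%N = v (x 0%N) ->
  (forall k, beta k.+1 =
     (- hfun JF C (x k.+1) (v (x k.+1)) *
        (`|hfun JF C (x k) (v (x k.+1))| + hfun JF C (x k) (v (x k.+1))))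
     / Num.max (mu * `|hfun JF C (x k.+1) (d k) * hfun JF C (x k) (v (x k.+1))|)
               (- mu * hfun JF C (x k) (v (x k)) * `|hfun JF C (x k) (v (x k.+1))|)) ->
  (forall k, d k.+1 = v (x k.+1) + beta k.+1 *: d k) ->
  (forall k, x k.+1 = x k + alpha k *: d k) ->
  (forall k, let tau := - hfun JF C (x k) (d k) / enorm (d k) ^+ 2 in
     (exists j : nat, alpha k = delta ^+ j * tau) /\
     armijo K F JF C rho e (x k) (d k) (alpha k) /\
     (forall j : nat, armijo K F JF C rho e (x k) (d k) (delta ^+ j * tau) ->
        delta ^+ j * tau <= alpha k)) ->
  (\sum_(0 <= k <oo) ((hfun JF C (x k) (d k) ^+ 2 / enorm (d k) ^+ 2)%:E) < +oo)%E.
Proof.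
move=> hpoint Kcl Kconv Kint hfg C0 Kdual Fd JFc vmin /andP[rho0 rho1]
  /andP[del0 del1] mu2 eint Ce [Lam [Lamo [LsubLam [L Lip]]]] A2 vne hd0 hbeta
  hd hx halpha.
have Cne : C != [::].
  have : dual_cone K 0 by move=> u _; rewrite dot0l.
  rewrite Kdual => -[t [y [_ [[l [_ hs _]] _]]]].
  apply/eqP => Ce0; move: hs; rewrite sum_ord0_eq ?Ce0 //.
  by move/eqP; rewrite eq_sym oner_eq0.
pose h := hfun JF C.
have hv : forall z, v z != 0 -> h z (v z) < 0.
  move=> z vz; have := vmin z 0; rewrite /h hfun0 // enorm0 expr0n /= mulr0 addr0.
  have := @dot_gt0 _ _ (v z) vz; rewrite -enorm_sq => h1 h2.
  lra.
have mu0 : 0 < mu by lra.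
have hk : forall k, h (x k) (d k) < 0.
  case=> [|k]; first by rewrite hd0; apply: hv; apply/eqP; exact: vne.
  rewrite hd.
  have hv'0 : h (x k.+1) (v (x k.+1)) < 0 by apply: hv; apply/eqP; exact: vne.
  have hvk : h (x k) (v (x k)) < 0 by apply: hv; apply/eqP; exact: vne.
  move: hv'0 hvk (hbeta k).
  set hv' := h (x k.+1) (v (x k.+1)); set hvk := h (x k) (v (x k)).
  rewrite -/h -/hv' -/hvk.
  set a := h (x k) (v (x k.+1)); set b := h (x k.+1) (d k).
  set N := - hv' * (`|a| + a).
  set M := Num.max (mu * `|b * a|) (- mu * hvk * `|a|).
  move=> hv'0 hvk0 hb.
  have N0 : 0 <= N.
    rewrite /N mulr_ge0 //; first lra.
    by have := ler_norm (- a); rewrite normrN; lra.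
  have M1 : mu * `|b * a| <= M by rewrite le_max lexx.
  have M0 : 0 <= M by apply: le_trans M1; rewrite mulr_ge0 // ltW.
  have beta0 : 0 <= beta k.+1 by rewrite hb divr_ge0.
  have betab : beta k.+1 * b <= 2 * - hv' / mu.
    have [M00|Mpos] := eqVneq M 0.
      rewrite hb M00 invr0 mulr0 mul0r; apply: divr_ge0; lra.
    have Mp : 0 < M by rewrite lt_def Mpos M0.
    rewrite hb mulrAC ler_pdivrMr //.
    have s1 : N * b <= N * `|b| by rewrite ler_wpM2l // ler_norm.
    have s2 : N <= - hv' * (2 * `|a|).
      by rewrite /N ler_wpM2l; have := ler_norm a; lra.
    have s3 : - hv' * (2 * `|a|) * `|b| = 2 * - hv' / mu * (mu * `|b * a|).
      by rewrite normrM; field; rewrite gt_eqF.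
    have s4 : 2 * - hv' / mu * (mu * `|b * a|) <= 2 * - hv' / mu * M.
      by rewrite ler_wpM2l // divr_ge0 //; lra.
    apply: le_trans s1 _; apply: le_trans (ler_wpM2r (normr_ge0 b) s2) _.
    by rewrite s3.
  have hD := hfunD JF C Cne (x k.+1) (v (x k.+1)) (beta k.+1 *: d k).
  have hZ := hfunZ JF C Cne (x k.+1) (beta k.+1) (d k) beta0.
  rewrite -/h -/hv' -/b in hD hZ.
  have lt1 : 2 * - hv' / mu < - hv'.
    by rewrite ltr_pdivrMr //; nra.
  lra.
have dne : forall k, d k != 0.
  by move=> k; apply/eqP => dk0; have := hk k; rewrite dk0 /h hfun0 // ltxx.
have D0 : forall k, 0 < enorm (d k) ^+ 2 by move=> k; rewrite enorm_sq dot_gt0.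
have tau0 : forall k, 0 < - h (x k) (d k) / enorm (d k) ^+ 2.
  by move=> k; rewrite divr_gt0 // oppr_gt0.
have alpha0 : forall k, 0 <= alpha k.
  move=> k; case: (halpha k) => [[j ->] _].
  by rewrite mulr_ge0 ?exprn_ge0 ?ltW // -/h tau0.
have eK : K e.
  by have [r r0 H] := interior_ball K e eint; apply: H => i; rewrite subrr normr0.
have armk : forall k, armijo K F JF C rho e (x k) (d k) (alpha k).
  by move=> k; case: (halpha k) => _ [].
have step : forall k, preceqK K (F (x k.+1)) (F (x k)).
  move=> k; have := armk k; rewrite /armijo -hx => H.
  apply: (preceq_trans hfg _ _ _ H); apply: (preceq_shift K e hfg eK).
  rewrite -mulrA mulr_ge0_le0 ?(ltW rho0) //.
  by rewrite mulr_ge0_le0 // ltW.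
have xL : forall k, preceqK K (F (x k)) (F (x 0%N)).
  elim=> [|k IH]; first exact: preceq_refl hfg _.
  exact: (preceq_trans hfg _ _ _ (step k) IH).
pose Mc0 := Mc C L.
have Mc00 : 0 < Mc0 := Mc_gt0 C L.
pose ca := Num.min 1 (delta * (1 - rho) / Mc0).
have ca0 : 0 < ca.
  by rewrite lt_min ltr01 /= divr_gt0 // mulr_gt0 // subr_gt0.
have alow : forall k, ca * (- h (x k) (d k) / enorm (d k) ^+ 2) <= alpha k.
  move=> k.
  have smallA := armijo_small K C F JF rho e Lam L (x 0%N) hfg Kcl Kdual Fd rho0 rho1
    eK Ce Lamo LsubLam Lip (x k) (d k) (xL k) (hk k) (dne k).
  case: (halpha k) => [_ [_ amax]].
  move: smallA amax (tau0 k) (D0 k) (hk k).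
  rewrite -/h -/Mc0.
  set tau := - h (x k) (d k) / enorm (d k) ^+ 2.
  set T := (1 - rho) * - h (x k) (d k) / (Mc0 * enorm (d k) ^+ 2).
  move=> smallA amax taup Dp hkp.
  have HT : T = (1 - rho) / Mc0 * tau.
    by rewrite /T /tau mulf_div.
  have T0 : 0 < T by rewrite HT mulr_gt0 // divr_gt0 // subr_gt0.
  have [tauT|Ttau] := leP tau T.
    have := amax 0%N; rewrite expr0 mul1r => /(_ (smallA tau _)).
    move=> /(_ _) H; apply: le_trans (H _) => //; last by rewrite (ltW taup) tauT.
    by rewrite ger_pMl // ge_min lexx.
  have Ttau0 : 0 < T / tau by rewrite divr_gt0.
  have d01 : 0 < delta < 1 by rewrite del0 del1.
  have [j0 hj0] := @geo_small R delta (T / tau) d01 Ttau0.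
  have exj : exists j, delta ^+ j * tau <= T.
    by exists j0; rewrite -ler_pdivlMr.
  case: (ex_minnP exj) => j Hj Hmin.
  have amx : delta ^+ j * tau <= alpha k.
    apply: amax; apply: smallA; rewrite Hj andbT mulr_ge0 // ?exprn_ge0 ?ltW //.
  case: j Hj Hmin amx => [|j'] Hj Hmin amx.
    by move: Hj; rewrite expr0 mul1r; lra.
  have Hj' : T < delta ^+ j' * tau.
    rewrite ltNge; apply/negP => H; have := Hmin j' H; by rewrite ltnn.
  apply: le_trans amx; rewrite exprS -mulrA.
  have c1 : ca <= delta * (1 - rho) / Mc0 by rewrite ge_min lexx orbT.
  apply: le_trans (ler_wpM2r (ltW taup) c1) _.
  have -> : delta * (1 - rho) / Mc0 * tau = delta * T by rewrite HT !mulrA.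
  by rewrite ler_wpM2l ?ltW.
pose w0 := head 0 C.
have headC : forall s : seq 'cV[R]_m, s != [::] -> head 0 s \in s.
  by case=> // c s' _; rewrite inE eqxx.
have w0C : w0 \in C := headC C Cne.
have w0nz : w0 != 0 by apply/eqP => w00; move: C0; rewrite -w00 w0C.
have w0d := C_in_dual K C Kdual w0 w0C.
have eps0 : 0 < dot w0 e.
  have [r r0 H] := interior_ball K e eint.
  have nw0 := enorm_ge0 w0.
  pose eps := r / (1 + enorm w0).
  have eps0 : 0 < eps by rewrite divr_gt0 //; lra.
  have Ke' : K (e - eps *: w0).
    apply: H => i; rewrite !mxE opprB addrC subrK normrM (gtr0_norm eps0).
    apply: le_lt_trans (ler_wpM2l (ltW eps0) (coord_le_enorm w0 i)) _.
    rewrite /eps mulrAC ltr_pdivrMr; last lra.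
    by rewrite ltr_pM2l //; lra.
  have := w0d _ Ke'; rewrite dotBr dotZr.
  have := @dot_gt0 _ _ w0 w0nz => h1 h2.
  have : 0 < eps * dot w0 w0 by rewrite mulr_gt0.
  lra.
have [D0' HD0] := A2 (fun k => F (x k))
   (fun k => ex_intro _ (x k) (conj (xL k) erefl)) step.
pose a k := dot w0 (F (x k)).
have aD : forall k, dot w0 D0' <= a k.
  by move=> k; have := w0d _ (HD0 k); rewrite dotBr subr_ge0.
have adesc : forall k, rho * alpha k * (- h (x k) (d k)) * dot w0 e <= a k - a k.+1.
  move=> k; have := w0d _ (armk k); rewrite -hx !dotBr dotDr dotZr /a.
  rewrite -/h; lra.
pose t k := h (x k) (d k) ^+ 2 / enorm (d k) ^+ 2.
pose cc := rho * dot w0 e * ca.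
have cc0 : 0 < cc by rewrite /cc !mulr_gt0.
have tb : forall k, t k <= (a k - a k.+1) / cc.
  move=> k; rewrite ler_pdivlMr //.
  apply: le_trans (adesc k); rewrite /cc /t.
  have := alow k; have := hk k; have := D0 k; have := alpha0 k.
  set hh := h (x k) (d k); set DD := enorm (d k) ^+ 2.
  move=> al0 DD0 hh0 alw.
  have e1 : hh ^+ 2 / DD = (- hh / DD) * (- hh) by rewrite [RHS]mulrAC mulrNN expr2.
  rewrite e1.
  have P0 : 0 <= rho * (- hh) * dot w0 e.
    by apply: mulr_ge0; [apply: mulr_ge0; [exact: ltW | rewrite oppr_ge0; exact: ltW] | exact: ltW].
  have H := ler_wpM2r P0 alw.
  have E1 : - hh / DD * - hh * (rho * dot w0 e * ca) =
    ca * (- hh / DD) * (rho * - hh * dot w0 e) by ring.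
  have E2 : alpha k * (rho * - hh * dot w0 e) = rho * alpha k * - hh * dot w0 e by ring.
  by rewrite E1 -E2.
have psum : forall N, \sum_(0 <= k < N) t k <= (a 0%N - a N) / cc.
  elim=> [|N IH]; first by rewrite big_geq // subrr mul0r.
  rewrite big_nat_recr //=.
  have := tb N; move: IH.
  rewrite !ler_pdivlMr // mulrDl; lra.
have t0 : forall k, 0 <= t k by move=> k; rewrite /t divr_ge0 // ?sqr_ge0 // ltW.
pose B := (a 0%N - dot w0 D0') / cc.
apply: (@le_lt_trans _ _ B%:E); last exact: ltry.
apply: lime_le.
  by apply: is_cvg_nneseries => k _ _; rewrite lee_fin t0.
apply: nearW => N; rewrite sumEFin lee_fin.
apply: le_trans (psum N) _.
by rewrite /B ler_pdivlMr // divfK ?gt_eqF // lerD2l lerN2 aD.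
Qed.
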